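(* Let $\Omega\subset\mathbb{R}^n$ be a non-empty, bounded, connected, open set with closure $\overline{\Omega}$. Let $J\in C(\overline{\Omega}\times\overline{\Omega})$, let $S\in C^\infty(\mathbb{R})$ have bounded $k$th derivative for every $k\in\{0,1,2,\dots\}$, and let $\tau\in C(\overline{\Omega}\times\overline{\Omega})$ be non-negative and not identically zero. Put $h:=\sup_{\overline{\Omega}\times\overline{\Omega}}\tau$, $Y:=C(\overline{\Omega})$ with supremum norm and $X:=C([-h,0];Y)$ with supremum norm. Let $\alpha>0$ and define $F:X\to Y$ by $$F(\phi):=-\alpha\phi(0)+G(\phi),\qquad G(\phi)(\mathbf{r})=\int_{\overline{\Omega}}J(\mathbf{r},\mathbf{r}')S\big(\phi(-\tau(\mathbf{r},\mathbf{r}'),\mathbf{r}')\big)\,d\mathbf{r}'.$$ Then $F$ is globally Lipschitz continuous.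
   Context: For $\phi\in X$ one writes $\phi(t,\mathbf{r}):=\phi(t)(\mathbf{r})$. $G$ maps $X$ into $Y$. *)

(* Defs.v *)
From HB Require Import structures.
From mathcomp Require Import all_boot all_order all_algebra.
From mathcomp Require Import all_classical all_reals all_analysis.
Set Implicit Arguments. Unset Strict Implicit. Unset Printing Implicit Defensive.
Import Order.TTheory GRing.Theory Num.Theory.
Import numFieldNormedType.Exports.
Local Open Scope classical_set_scope.
Local Open Scope ring_scope.

(* Points of R^n are row vectors 'rV[R]_n (product topology / max norm). *)

(* Lebesgue integral on R^n of a function, computed as the iterated
   one-dimensional Lebesgue integral (Fubini): for n = 0 the space is a point
   (mass 1); for n.+1 integrate the first coordinate last. *)
Fixpoint iint (R : realType) (n : nat) : ('rV[R]_n -> R) -> R :=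
  match n return ('rV[R]_n -> R) -> R with
  | 0 => fun f => f 0
  | n'.+1 => fun f =>
      Rintegral (@lebesgue_measure R) setT
        (fun x : R => iint (fun v : 'rV[R]_n' => f (row_mx (x%:M : 'M[R]_1) v)))
  end.

Definition int_over (R : realType) (n : nat) (K : set 'rV[R]_n)
    (f : 'rV[R]_n -> R) : R :=
  iint (fun v => \1_K v * f v).

Definition smooth (R : realType) (S : R -> R) : Prop :=
  forall k x, derivable (derive1n k S) x 1.

Definition all_derivs_bounded (R : realType) (S : R -> R) : Prop :=
  forall k : nat, exists M : R, forall x : R, `|derive1n k S x| <= M.

Definition inY (R : realType) (n : nat) (K : set 'rV[R]_n)
    (y : 'rV[R]_n -> R) : Prop :=
  {within K, continuous y}.

Definition normY (R : realType) (n : nat) (K : set 'rV[R]_n)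
    (y : 'rV[R]_n -> R) : R :=
  sup [set `|y r| | r in K].

Definition inX (R : realType) (n : nat) (K : set 'rV[R]_n) (h : R)
    (phi : R -> 'rV[R]_n -> R) : Prop :=
  (forall t, t \in `[-h, 0] -> inY K (phi t)) /\
  (forall t0, t0 \in `[-h, 0] -> forall e : R, 0 < e ->
     exists2 d : R, 0 < d & forall t, t \in `[-h, 0] -> `|t - t0| < d ->
       normY K (fun r => phi t r - phi t0 r) < e).

Definition normX (R : realType) (n : nat) (K : set 'rV[R]_n) (h : R)
    (phi : R -> 'rV[R]_n -> R) : R :=
  sup [set normY K (phi t) | t in [set t | t \in `[-h, 0]]].

Definition Gop (R : realType) (n : nat) (K : set 'rV[R]_n)
    (J tau : 'rV[R]_n -> 'rV[R]_n -> R) (S : R -> R)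
    (phi : R -> 'rV[R]_n -> R) : 'rV[R]_n -> R :=
  fun r => int_over K (fun r' => J r r' * S (phi (- tau r r') r')).

Definition Fop (R : realType) (n : nat) (K : set 'rV[R]_n)
    (J tau : 'rV[R]_n -> 'rV[R]_n -> R) (S : R -> R) (alpha : R)
    (phi : R -> 'rV[R]_n -> R) : 'rV[R]_n -> R :=
  fun r => - alpha * phi 0 r + Gop K J tau S phi r.

(* Main.v *)
Require Import Defs.
From HB Require Import structures.
From mathcomp Require Import all_boot all_order all_algebra.
From mathcomp Require Import all_classical all_reals all_analysis.
From mathcomp Require Import ring lra measurable_realfun.
Import Order.TTheory GRing.Theory Num.Theory.
Import numFieldNormedType.Exports.
Local Open Scope classical_set_scope.
Local Open Scope ring_scope.
Set Implicit Arguments. Unset Strict Implicit.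

Section OneD.
Import HBNNSimple.
Variable R : realType.
Local Notation mu := (@lebesgue_measure R).

Lemma maxr0_lip (p q : R) : Num.max p 0 <= Num.max q 0 + `|p - q|.
Proof.
have h1 : q <= Num.max q 0 by rewrite le_max lexx.
have h2 : 0 <= Num.max q 0 by rewrite le_max lexx orbT.
have h3 : p - q <= `|p - q| := ler_norm _.
have h4 : 0 <= `|p - q| := normr_ge0 _.
rewrite ge_max; apply/andP; split; lra.
Qed.

Lemma Nle (f g : R -> \bar R) : (forall x, 0 <= f x)%E ->
  (forall x, f x <= g x)%E ->
  (\int[mu]_x f x <= \int[mu]_x g x)%E.
Proof.
move=> f0 fg.
have g0 x : (0 <= g x)%E by apply: le_trans (f0 x) (fg x).
rewrite !ge0_integralTE //; apply: ereal_sup_le => _ [h hf <-].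
by exists h => //= x; apply: le_trans (hf x) (fg x).
Qed.

Lemma Nsub (f g : R -> \bar R) (w : R -> R) : (forall x, 0 <= f x)%E ->
  (forall x, 0 <= g x)%E -> (forall x, 0 <= w x) ->
  measurable_fun setT w -> (forall x, f x <= g x + (w x)%:E)%E ->
  (\int[mu]_x f x <= \int[mu]_x g x + \int[mu]_x (w x)%:E)%E.
Proof.
move=> f0 g0 w0 mw fgw.
rewrite [X in (X <= _)%E]ge0_integralTE //; apply: ge_ereal_sup => _ [h hf <-] /=.
rewrite -integralT_nnsfun.
pose hh := HBNNSimple.NonNegSimpleFun.sort h.
pose k := fun x => Num.max (hh x - w x) 0.
have mh : measurable_fun setT hh by exact: measurable_funPT.
have mk : measurable_fun setT k.
  by apply: measurable_maxr => //; apply: measurable_funB.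
have k0 x : 0 <= k x by rewrite le_max lexx orbT.
apply: (@le_trans _ _ (\int[mu]_x (k x + w x)%:E)%E).
  apply: ge0_le_integral => //.
  - by move=> x _; rewrite lee_fin.
  - by apply/measurable_EFinP.
  - by apply/measurable_EFinP; apply: measurable_funD.
  move=> x _; rewrite lee_fin /k.
  case: (lerP (hh x - w x) 0) => H.
    by move: H; rewrite /hh => H; lra.
  by move: H; rewrite /hh => H; lra.
rewrite (_ : (fun x => (k x + w x)%:E) = (fun x => (k x)%:E + (w x)%:E)%E); last first.
  by apply/funext => x.
rewrite ge0_integralD //; last 4 first.
- by move=> x _; rewrite lee_fin.
- by apply/measurable_EFinP.
- by move=> x _; rewrite lee_fin.
- by apply/measurable_EFinP.
apply: leeD2r; apply: Nle => [x|x]; first by rewrite lee_fin.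
rewrite /k; case: (lerP (hh x - w x) 0) => H; first by [].
move: (g0 x) (le_trans (hf x) (fgw x)); case: (g x) => [r| |] //=.
  by rewrite /hh !lee_fin => _ ?; lra.
by move=> *; rewrite leey.
Qed.


Section Box.
Variable a : R.
Hypothesis a0 : 0 <= a.
Let I : set R := [set` `[-a, a]].
Let mI : measurable I. Proof. exact: measurable_itv. Qed.

Lemma indI x : \1_I x = if `|x| <= a then 1 else 0 :> R.
Proof.
rewrite indicE; case: ifPn => H.
  by rewrite mem_set // /I /= in_itv /= -ler_norml.
rewrite memNset //= /I /= in_itv /= -ler_norml; exact/negP.
Qed.

Lemma muI : mu I = (2 * a)%:E.
Proof.
rewrite /I lebesgue_measure_itv /= lte_fin.
case: ltP => H; first by rewrite -EFinB; congr EFin; lra.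
have -> : a = 0 by apply/eqP; rewrite eq_le a0 andbT; lra.
by rewrite mulr0.
Qed.

Lemma Iind (c : R) : 0 <= c -> (\int[mu]_x (c * \1_I x)%:E)%E = (c * (2 * a))%:E.
Proof.
move=> c0.
rewrite (@integralZl_indic _ _ _ mu setT measurableT (fun _ => I) c) //; last first.
  by move=> /(le_lt_trans c0); rewrite ltxx.
rewrite integral_indic // setIT EFinM; congr (_ * _)%E; exact: muI.
Qed.

Lemma fin_bound (v : R -> R) (M : R) : 0 <= M -> (forall x, 0 <= v x) ->
  (forall x, v x <= M * \1_I x) -> (\int[mu]_x (v x)%:E)%E \is a fin_num.
Proof.
move=> M0 v0 vM.
rewrite ge0_fin_numE; last by apply: integral_ge0 => x _; rewrite lee_fin.
apply: (@le_lt_trans _ _ ((\int[mu]_x (M * \1_I x)%:E)%E)).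
  by apply: Nle => x; rewrite lee_fin.
by rewrite Iind // ltry.
Qed.

Lemma Rint_split (u : R -> R) (M : R) : 0 <= M ->
  (forall x, a < `|x| -> u x = 0) -> (forall x, `|u x| <= M) ->
  [/\ (\int[mu]_x (Num.max (u x) 0)%:E)%E \is a fin_num,
      (\int[mu]_x (Num.max (- u x) 0)%:E)%E \is a fin_num &
  Rintegral mu setT u = fine ((\int[mu]_x (Num.max (u x) 0)%:E)%E)
     - fine ((\int[mu]_x (Num.max (- u x) 0)%:E)%E)].
Proof.
move=> M0 uz uM.
have B (s : R) x : `|s| <= M -> (a < `|x| -> s = 0) ->
    Num.max s 0 <= M * \1_I x.
  move=> sM sz; rewrite indI; case: ifPn => H.
    rewrite mulr1 ge_max M0 andbT; exact: le_trans (ler_norm _) sM.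
  by rewrite sz ?mulr0 ?maxxx //; rewrite ltNge.
have f1 : (\int[mu]_x (Num.max (u x) 0)%:E)%E \is a fin_num.
  apply: (@fin_bound _ M M0) => x; first by rewrite le_max lexx orbT.
  exact: B (uM x) (uz x).
have f2 : (\int[mu]_x (Num.max (- u x) 0)%:E)%E \is a fin_num.
  apply: (@fin_bound _ M M0) => x; first by rewrite le_max lexx orbT.
  apply: B; first by rewrite normrN.
  by move=> /uz ->; rewrite oppr0.
split => //.
rewrite /Rintegral integralE.
have -> : ((fun x => (u x)%:E)^\+)%E = (fun x => (Num.max (u x) 0)%:E).
  by apply/funext => x; rewrite funeposE EFin_max.
have -> : ((fun x => (u x)%:E)^\-)%E = (fun x => (Num.max (- u x) 0)%:E).
  by apply/funext => x; rewrite funenegE EFin_max EFinN.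
by rewrite fineB.
Qed.

Lemma R1 (D M : R) (u1 u2 : R -> R) :
  (forall x, a < `|x| -> u1 x = 0 /\ u2 x = 0) ->
  (forall x, `|u1 x| <= M) -> (forall x, `|u2 x| <= M) ->
  (forall x, `|u1 x - u2 x| <= D) ->
  `|Rintegral mu setT u1 - Rintegral mu setT u2| <= 4 * a * D.
Proof.
move=> uz u1M u2M uD.
have M0 : 0 <= M := le_trans (normr_ge0 _) (u1M 0).
have D0 : 0 <= D := le_trans (normr_ge0 _) (uD 0).
have [f1 g1 ->] := @Rint_split u1 M M0 (fun x h => (uz x h).1) u1M.
have [f2 g2 ->] := @Rint_split u2 M M0 (fun x h => (uz x h).2) u2M.
have mw : measurable_fun setT (fun x => D * \1_I x).
  by apply: measurable_funM => //; exact: measurable_indic.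
have w0 x : 0 <= D * \1_I x by rewrite mulr_ge0 // indI; case: ifP.
have key (v1 v2 : R -> R) : (forall x, `|v1 x - v2 x| <= D) ->
    (forall x, a < `|x| -> v1 x = 0 /\ v2 x = 0) ->
    ((\int[mu]_x (Num.max (v1 x) 0)%:E) <= (\int[mu]_x (Num.max (v2 x) 0)%:E)
      + (\int[mu]_x (D * \1_I x)%:E))%E.
  move=> vD vz; apply: Nsub => // x.
  - by rewrite lee_fin le_max lexx orbT.
  - by rewrite lee_fin le_max lexx orbT.
  rewrite -EFinD lee_fin indI; case: ifPn => H.
    by rewrite mulr1; apply: le_trans (maxr0_lip (v1 x) (v2 x)) _; rewrite lerD2l.
  by have := vz x; rewrite ltNge H => /(_ isT) [-> ->]; rewrite mulr0 addr0 maxxx.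
have k1 := key u1 u2 uD uz.
have uD' x : `|u2 x - u1 x| <= D by rewrite distrC.
have uz' x : a < `|x| -> u2 x = 0 /\ u1 x = 0 by move=> /uz [-> ->].
have nD x : `|- u1 x - - u2 x| <= D by rewrite -opprD normrN.
have nD' x : `|- u2 x - - u1 x| <= D by rewrite -opprD normrN.
have nz x : a < `|x| -> - u1 x = 0 /\ - u2 x = 0 by move=> /uz [-> ->]; rewrite oppr0.
have nz' x : a < `|x| -> - u2 x = 0 /\ - u1 x = 0 by move=> /uz [-> ->]; rewrite oppr0.
have k2 := key u2 u1 uD' uz'.
have k3 := key (fun x => - u1 x) (fun x => - u2 x) nD nz.
have k4 := key (fun x => - u2 x) (fun x => - u1 x) nD' nz'.
move: k1 k2 k3 k4; rewrite Iind // -(fineK f1) -(fineK f2) -(fineK g1) -(fineK g2) -!EFinD !lee_fin /=.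
move=> k1 k2 k3 k4.
rewrite ler_norml; apply/andP; split; lra.
Qed.

End Box.

End OneD.

Section Iter.
Variable R : realType.

Definition inbox (c : R) {n} (v : 'rV[R]_n) := forall i, `|v ord0 i| <= c.

Lemma iint0 n : iint (fun _ : 'rV[R]_n => 0) = 0.
Proof.
elim: n => [//|n IH] /=; rewrite IH /Rintegral.
have -> : (fun _ : R => (0:R)%:E) = cst 0%E by [].
by rewrite integral0.
Qed.

Lemma row_mx_l n (x : R) (v : 'rV[R]_n) :
  row_mx (x%:M : 'M[R]_1) v ord0 (lshift n ord0) = x.
Proof. by rewrite row_mxEl mxE eqxx mulr1n. Qed.

Lemma row_mx_r n (x : R) (v : 'rV[R]_n) i :
  row_mx (x%:M : 'M[R]_1) v ord0 (rshift 1 i) = v ord0 i.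
Proof. by rewrite row_mxEr. Qed.

Lemma iint_lip n (c D M : R) (f1 f2 : 'rV[R]_n -> R) : 0 <= c ->
  (forall v, ~ inbox c v -> f1 v = 0 /\ f2 v = 0) ->
  (forall v, `|f1 v| <= M) -> (forall v, `|f2 v| <= M) ->
  (forall v, `|f1 v - f2 v| <= D) ->
  `|iint f1 - iint f2| <= (4 * c) ^+ n * D.
Proof.
elim: n D M f1 f2 => [|n IH] D M f1 f2 c0 fz f1M f2M fD /=.
  by rewrite expr0 mul1r.
have M0 : 0 <= M := le_trans (normr_ge0 _) (f1M 0).
have secz (x : R) v : ~ inbox c v -> f1 (row_mx x%:M v) = 0 /\ f2 (row_mx x%:M v) = 0.
  move=> nv; apply: fz => H; apply: nv => i.
  by have := H (rshift 1 i); rewrite row_mx_r.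
have secx (x : R) v : c < `|x| -> f1 (row_mx x%:M v) = 0 /\ f2 (row_mx x%:M v) = 0.
  move=> cx; apply: fz => H.
  by have := H (lshift n (ord0 : 'I_1)); rewrite row_mx_l leNgt cx.
rewrite exprS -mulrA.
apply: (@R1 _ c c0 _ ((4 * c) ^+ n * M)).
- move=> x cx.
  have -> : (fun v => f1 (row_mx x%:M v)) = (fun _ => 0).
    by apply/funext => v; case: (secx x v cx).
  have -> : (fun v => f2 (row_mx x%:M v)) = (fun _ => 0).
    by apply/funext => v; case: (secx x v cx).
  by rewrite iint0.
- move=> x.
  have := IH M M (fun v => f1 (row_mx x%:M v)) (fun _ => 0) c0.
  rewrite iint0 subr0; apply => //.
  + by move=> v /(secz x) [].
  + by move=> v; rewrite normr0.
  + by move=> v; rewrite subr0.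
- move=> x.
  have := IH M M (fun v => f2 (row_mx x%:M v)) (fun _ => 0) c0.
  rewrite iint0 subr0; apply => //.
  + by move=> v /(secz x) [].
  + by move=> v; rewrite normr0.
  + by move=> v; rewrite subr0.
move=> x; apply: IH => //.
exact: secz.
Qed.

End Iter.

Section Helpers.
Variable R : realType.

Lemma bnd_ex (A : set R) : bounded_set A -> exists M, forall y, A y -> `|y| <= M.
Proof. by case=> M0 [_ HM]; exists (M0 + 1); apply: HM; rewrite ltrDl. Qed.

Lemma cont_bnd {T : topologicalType} (A : set T) (f : T -> R) : compact A ->
  {within A, continuous f} -> exists M, forall x, A x -> `|f x| <= M.
Proof.
move=> cA fc; have [M HM] := @bnd_ex _ (compact_bounded (continuous_compact fc cA)).
by exists M => x Ax; apply: HM; exists x.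
Qed.

Lemma closure_norm_le n (O : set 'rV[R]_n) (c : R) :
  (forall x, O x -> `|x| <= c) -> forall x, closure O x -> `|x| <= c.
Proof.
move=> Oc x Cx; rewrite leNgt; apply/negP => cx.
have e0 : 0 < `|x| - c by rewrite subr_gt0.
have [y [Oy bxy]] := Cx _ (nbhsx_ballx x (`|x| - c) e0).
move: bxy; rewrite -ball_normE /= => bxy.
have := Oc y Oy; have := ler_normD (x - y) y; rewrite subrK.
lra.
Qed.

Lemma mx_coord n (v : 'rV[R]_n) i : `|v ord0 i| <= `|v|.
Proof.
rewrite [X in _ <= X]mx_normrE.
exact: (le_bigmax _ (fun ij : 'I_1 * 'I_n => `|v ij.1 ij.2|) (ord0, i)).
Qed.

Lemma normY_ge n (K : set 'rV[R]_n) y B r : (forall r, K r -> `|y r| <= B) ->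
  K r -> `|y r| <= normY K y.
Proof.
move=> yB Kr; apply: sup_upper_bound; last by exists r.
split; first by exists `|y r|, r.
by exists B => _ [s Ks <-]; exact: yB.
Qed.

Lemma normY_le n (K : set 'rV[R]_n) y m : (exists r, K r) ->
  (forall r, K r -> `|y r| <= m) -> normY K y <= m.
Proof.
move=> [r Kr] H; apply: ge_sup; first by exists `|y r|, r.
by move=> _ [s Ks <-]; exact: H.
Qed.

Lemma S_lip (S : R -> R) : smooth S -> all_derivs_bounded S ->
  exists M1, 0 <= M1 /\ forall a b, `|S a - S b| <= M1 * `|a - b|.
Proof.
move=> Ss Sb; have [M1 HM1] := Sb 1%N; exists M1; split.
  exact: le_trans (normr_ge0 _) (HM1 0).
have dS x : derivable S x 1 := Ss 0%N x.
have iD (x : R) : is_derive x (1:R) S ((S^`())%classic x) by rewrite derive1E; apply: derivableP.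
have key a b : a < b -> `|S a - S b| <= M1 * `|a - b|.
  move=> ab.
  have [c0 _ E] := MVT ab (fun x _ => iD x)
    (derivable_within_continuous (fun x _ => dS x)).
  rewrite distrC E normrM (distrC a b); apply: ler_wpM2r => //.
  exact: HM1 c0.
move=> a b; case: (ltgtP a b) => [ab|ba|->]; first exact: key.
  by rewrite distrC (distrC a); exact: key.
by rewrite !subrr !normr0 mulr0.
Qed.

End Helpers.

Lemma within_cont_eps (R : realType) (A : set R) (g : R -> R) :
  (forall t0, A t0 -> forall e, 0 < e -> exists2 d, 0 < d &
     forall t, A t -> `|t - t0| < d -> `|g t - g t0| < e) ->
  {within A, continuous g}.
Proof.
move=> H; apply/subspace_continuousP => t0 At0.
apply/cvgrPdist_lt => e e0.
have [d d0 Hd] := H t0 At0 e e0.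
apply/nbhs_ballP; exists d => // t bt At.
move: bt; rewrite -ball_normE /= => bt.
by rewrite distrC; apply: Hd => //; rewrite distrC.
Qed.

Lemma tri3 (R : realType) (a b c d : R) : `|a - b| <= `|c - d| + `|a - c| + `|b - d|.
Proof.
have := ler_normD (c - d) ((a - c) - (b - d)); have := ler_normB (a - c) (b - d).
have -> : c - d + (a - c - (b - d)) = a - b by ring.
lra.
Qed.

Unset Implicit Arguments.

Theorem lemma2p3 (R : realType) (n : nat) (Omega : set 'rV[R]_n)
  (J : 'rV[R]_n -> 'rV[R]_n -> R) (S : R -> R)
  (tau : 'rV[R]_n -> 'rV[R]_n -> R) (alpha : R) :
  Omega !=set0 -> bounded_set Omega -> connected Omega -> open Omega ->
  {within [set p | closure Omega p.1 /\ closure Omega p.2],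
     continuous (fun p : 'rV[R]_n * 'rV[R]_n => J p.1 p.2)} ->
  smooth S -> all_derivs_bounded S ->
  {within [set p | closure Omega p.1 /\ closure Omega p.2],
     continuous (fun p : 'rV[R]_n * 'rV[R]_n => tau p.1 p.2)} ->
  (forall r r', closure Omega r -> closure Omega r' -> 0 <= tau r r') ->
  (exists r, exists2 r', closure Omega r & closure Omega r' /\ tau r r' != 0) ->
  0 < alpha ->
  let h := sup [set tau p.1 p.2 | p in
                 [set p | closure Omega p.1 /\ closure Omega p.2]] in
  exists L : R, forall phi psi : R -> 'rV[R]_n -> R,
    inX (closure Omega) h phi -> inX (closure Omega) h psi ->
    normY (closure Omega)
      (fun r => Fop (closure Omega) J tau S alpha phi r
              - Fop (closure Omega) J tau S alpha psi r)
    <= L * normX (closure Omega) h (fun t r => phi t r - psi t r).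
Proof.
move=> Onz Ob Oc Oo Jc Ss Sb tauc tau0 tnz a0 h.
set K := closure Omega in Jc tauc tau0 tnz h *.
have [r0 Kr0] : exists r, K r by case: Onz => r Or; exists r; exact: subset_closure.
have [c Oc'] : exists c, forall x, Omega x -> `|x| <= c.
  by case: Ob => M0 [_ HM]; exists (M0 + 1); apply: HM; rewrite ltrDl.
have Kc : forall x, K x -> `|x| <= c := closure_norm_le Oc'.
have c0 : 0 <= c := le_trans (normr_ge0 _) (Kc _ Kr0).
have Kbox v : K v -> inbox c v by move=> Kv i; apply: le_trans (mx_coord v i) (Kc v Kv).
have cK : compact K.
  apply: bounded_closed_compact; last exact: closed_closure.
  exists c; split; first exact: num_real.
  by move=> y cy x Kx; apply: le_trans (Kc x Kx) (ltW cy).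
have cKK : compact [set p : 'rV[R]_n * 'rV[R]_n | K p.1 /\ K p.2] := compact_setX cK cK.
have [MJ HJ] := cont_bnd cKK Jc.
have [Mt Ht] := cont_bnd cKK tauc.
have tauh r r' : K r -> K r' -> tau r r' <= h.
  move=> Kr Kr'; apply: sup_upper_bound; last by exists (r, r').
  split; first by exists (tau r r'), (r, r').
  by exists Mt => _ [p Kp <-]; exact: le_trans (ler_norm _) (Ht p Kp).
have h0 : 0 <= h := le_trans (tau0 _ _ Kr0 Kr0) (tauh _ _ Kr0 Kr0).
have MJ0 : 0 <= MJ := le_trans (normr_ge0 _) (HJ (r0, r0) (conj Kr0 Kr0)).
have [M0 HS0] := Sb 0%N.
have M00 : 0 <= M0 := le_trans (normr_ge0 _) (HS0 0).
have HS0' (x : R) : `|S x| <= M0 := HS0 x.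
have [M1 [M10 HS1]] := S_lip Ss Sb.
have BK y : inY K y -> exists B, forall r, K r -> `|y r| <= B.
  by move=> yc; exact: cont_bnd cK yc.
have BKB (y1 y2 : 'rV[R]_n -> R) : (exists B, forall r, K r -> `|y1 r| <= B) ->
    (exists B, forall r, K r -> `|y2 r| <= B) ->
    exists B, forall r, K r -> `|y1 r - y2 r| <= B.
  move=> [B1 H1] [B2 H2]; exists (B1 + B2) => r Kr.
  by apply: le_trans (ler_normB _ _) _; apply: lerD; auto.
have ind1 v : K v -> \1_K v = 1 :> R by move=> Kv; rewrite indicE mem_set.
have ind0 v : ~ K v -> \1_K v = 0 :> R by move=> Kv; rewrite indicE memNset.
exists (alpha + (4 * c) ^+ n * (MJ * M1)).
move=> phi psi [phY phC] [psY psC].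
set N := normX K h (fun t r => phi t r - psi t r).
pose I := `[-h, 0].
have I0 : (0:R) \in I by rewrite in_itv /= oppr_le0 h0 lexx.
have BKd t : t \in I -> exists B, forall r, K r -> `|phi t r - psi t r| <= B.
  by move=> tI; apply: BKB; apply: BK; [exact: phY | exact: psY].
pose g t := normY K (fun r => phi t r - psi t r).
have gcont : {within [set` I], continuous g}.
  apply: within_cont_eps => t0 t0I e e0.
  have e20 : 0 < e / 2 by rewrite divr_gt0.
  have [d1 d10 H1] := phC t0 t0I (e / 2) e20.
  have [d2 d20 H2] := psC t0 t0I (e / 2) e20.
  exists (Num.min d1 d2); first by rewrite lt_min d10 d20.
  move=> t tI; rewrite lt_min => /andP [td1 td2].
  have A1 := H1 t tI td1; have A2 := H2 t tI td2.
  set n1 := normY K (fun r => phi t r - phi t0 r) in A1.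
  set n2 := normY K (fun r => psi t r - psi t0 r) in A2.
  have P1 r : K r -> `|phi t r - phi t0 r| <= n1.
    have [B HB] := BKB _ _ (BK _ (phY t tI)) (BK _ (phY t0 t0I)).
    exact: normY_ge HB.
  have P2 r : K r -> `|psi t r - psi t0 r| <= n2.
    have [B HB] := BKB _ _ (BK _ (psY t tI)) (BK _ (psY t0 t0I)).
    exact: normY_ge HB.
  have Q t1 r : t1 \in I -> K r -> `|phi t1 r - psi t1 r| <= g t1.
    by move=> t1I Kr; have [B HB] := BKd t1 t1I; exact: normY_ge HB Kr.
  have L1 : g t <= g t0 + n1 + n2.
    apply: normY_le; first by exists r0.
    move=> r Kr; apply: le_trans (tri3 _ _ (phi t0 r) (psi t0 r)) _.
    by apply: lerD; [apply: lerD|]; auto.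
  have L2 : g t0 <= g t + n1 + n2.
    apply: normY_le; first by exists r0.
    move=> r Kr; apply: le_trans (tri3 _ _ (phi t r) (psi t r)) _.
    by apply: lerD; [apply: lerD|]; rewrite ?(distrC (phi t0 r)) ?(distrC (psi t0 r)); auto.
  rewrite ltr_norml; apply/andP; split; lra.
have [G HG] := cont_bnd (@segment_compact _ (- h) 0) gcont.
have gN t : t \in I -> g t <= N.
  move=> tI; apply: sup_upper_bound; last by exists t.
  split; first by exists (g 0), 0.
  by exists G => _ [s sI <-]; apply: le_trans (ler_norm _) (HG s sI).
have pw t r : t \in I -> K r -> `|phi t r - psi t r| <= N.
  move=> tI Kr; have [B HB] := BKd t tI.
  exact: le_trans (normY_ge HB Kr) (gN t tI).
have N0 : 0 <= N := le_trans (normr_ge0 _) (pw 0 r0 I0 Kr0).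
apply: normY_le; first by exists r0.
move=> r Kr; rewrite /Fop /Gop /int_over.
set f1 := fun v => \1_K v * (J r v * S (phi (- tau r v) v)).
set f2 := fun v => \1_K v * (J r v * S (psi (- tau r v) v)).
have HG12 : `|iint f1 - iint f2| <= (4 * c) ^+ n * (MJ * (M1 * N)).
  apply: (@iint_lip R n c _ (MJ * M0)) => //.
  - move=> v nb; have nK : ~ K v by move=> /Kbox.
    by rewrite /f1 /f2 ind0 // !mul0r.
  - move=> v; rewrite /f1; have [Kv|nKv] := pselect (K v).
      rewrite ind1 // mul1r normrM; apply: ler_pM => //; try exact: HS0'.
      exact: (HJ (r, v) (conj Kr Kv)).
    by rewrite ind0 // mul0r normr0 mulr_ge0.
  - move=> v; rewrite /f2; have [Kv|nKv] := pselect (K v).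
      rewrite ind1 // mul1r normrM; apply: ler_pM => //; try exact: HS0'.
      exact: (HJ (r, v) (conj Kr Kv)).
    by rewrite ind0 // mul0r normr0 mulr_ge0.
  - move=> v; rewrite /f1 /f2; have [Kv|nKv] := pselect (K v).
      rewrite ind1 // !mul1r -mulrBr normrM; apply: ler_pM => //.
        exact: (HJ (r, v) (conj Kr Kv)).
      apply: le_trans (HS1 _ _) _; apply: ler_wpM2l => //.
      apply: pw => //.
      by rewrite in_itv /= lerN2 oppr_le0 tauh // tau0.
    by rewrite ind0 // !mul0r subrr normr0 !mulr_ge0.
have Hp := pw 0 r I0 Kr.
have -> : - alpha * phi 0 r + iint f1 - (- alpha * psi 0 r + iint f2) =
   - alpha * (phi 0 r - psi 0 r) + (iint f1 - iint f2) by ring.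
apply: le_trans (ler_normD _ _) _; rewrite normrM normrN (gtr0_norm a0).
have := ler_wpM2l (ltW a0) Hp.
move: HG12; rewrite (_ : (4 * c) ^+ n * (MJ * (M1 * N)) = ((4 * c) ^+ n * (MJ * M1)) * N); last by ring.
rewrite mulrDl; lra.
Qed.
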